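(* Let $\mathcal{U}\subset\Delta(\mathcal{X}\times\mathcal{Y})$ be a convex and compact uncertainty set and let $\mathrm{h}^{\mathcal{U}}$ be an $\ell$-MRC for $\mathcal{U}$. If $\mathcal{U}$ contains the true underlying distribution $\mathrm{p}^*$, then $$\min_{\mathrm{h}\in \mathrm{T}(\mathcal{X},\mathcal{Y})}R_\ell(\mathrm{h})\leq H_\ell(\mathcal{U}),\qquad R_\ell(\mathrm{h}^{\mathcal{U}})\leq H_\ell(\mathcal{U}).$$ In addition, if $\mathrm{p}^*$ maximizes the $\ell$-entropy over $\mathcal{U}$, then $\ell$-MRCs for $\mathcal{U}$ are Bayes classifiers and $$\min_{\mathrm{h}\in \mathrm{T}(\mathcal{X},\mathcal{Y})}R_\ell(\mathrm{h})= R_\ell(\mathrm{h}^{\mathcal{U}})=H_\ell(\mathcal{U}).$$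
   Context: Let $\mathcal{X}$ and $\mathcal{Y}$ be finite nonempty sets, with $\mathcal{Y}=\{1,\dots,|\mathcal{Y}|\}$. For a finite set $\mathcal{Z}$, $\Delta(\mathcal{Z})$ denotes the set of probability distributions on $\mathcal{Z}$. A classification rule is a map $\mathrm{h}$ assigning to each $x\in\mathcal{X}$ a distribution $\mathrm{h}(\cdot|x)\in\Delta(\mathcal{Y})$; $\mathrm{T}(\mathcal{X},\mathcal{Y})$ is the set of all classification rules. A score function $L:\Delta(\mathcal{Y})\times\mathcal{Y}\to(-\infty,\infty]$ is lower semi-continuous and convex in its first argument; the associated classification loss is $\ell(\mathrm{h},(x,y))=L(\mathrm{h}(\cdot|x),y)$, and for $\mathrm{p}\in\Delta(\mathcal{X}\times\mathcal{Y})$, $\ell(\mathrm{h},\mathrm{p})=\sum_{x,y}\mathrm{p}(x,y)\ell(\mathrm{h},(x,y))$. $H_\ell(\mathrm{p})=\min_{\mathrm{h}\in\mathrm{T}(\mathcal{X},\mathcal{Y})}\ell(\mathrm{h},\mathrm{p})$ and $H_\ell(\mathcal{U})=\max_{\mathrm{p}\in\mathcal{U}}H_\ell(\mathrm{p})$. A rule $\mathrm{h}^{\mathcal{U}}$ is an $\ell$-MRC for $\mathcal{U}$ if $\mathrm{h}^{\mathcal{U}}\in\arg\min_{\mathrm{h}}\max_{\mathrm{p}\in\mathcal{U}}\ell(\mathrm{h},\mathrm{p})$. $\mathrm{p}^*\in\Delta(\mathcal{X}\times\mathcal{Y})$ is the true underlying distribution of instance-label pairs, $R_\ell(\mathrm{h})=\ell(\mathrm{h},\mathrm{p}^*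 )$ is the $\ell$-risk, and a Bayes classifier is a rule minimizing $R_\ell$ over $\mathrm{T}(\mathcal{X},\mathcal{Y})$. *)

(* Defs.v *)
From HB Require Import structures.
From mathcomp Require Import all_boot all_order all_algebra.
From mathcomp Require Import all_classical all_reals all_analysis.
Import numFieldNormedType.Exports.
Set Implicit Arguments. Unset Strict Implicit. Unset Printing Implicit Defensive.
Import Order.TTheory GRing.Theory Num.Theory.
Local Open Scope classical_set_scope.
Local Open Scope ring_scope.

(* Delta(Z) for a finite set Z: probability distributions on Z, represented
   as real functions Z -> R (product topology on Z -> R). *)
Definition simplex (R : realType) (Z : finType) : set (Z -> R) :=
  [set q | (forall z, 0 <= q z) /\ \sum_(z : Z) q z = 1].

Definition mix (R : realType) (Z : finType) (t : R) (q1 q2 : Z -> R) : Z -> R :=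
  fun z => t * q1 z + (1 - t) * q2 z.

Definition convex_set_of (R : realType) (Z : finType) (U : set (Z -> R)) : Prop :=
  forall q1 q2 t, U q1 -> U q2 -> 0 <= t <= 1 -> U (mix t q1 q2).

Definition lsc_on (R : realType) (T : topologicalType) (D : set T)
    (f : T -> \bar R) : Prop :=
  forall x, D x -> forall a : R, (a%:E < f x)%E ->
    \forall y \near x, D y -> (a%:E < f y)%E.

(* Score function L : Delta(Y) x Y -> (-oo, +oo], lsc and convex in its
   first argument (only values on Delta(Y) matter). *)
Definition score_function (R : realType) (Y : finType)
    (L : (Y -> R) -> Y -> \bar R) : Prop :=
  (forall q y, simplex q -> L q y != -oo%E) /\
  (forall y, lsc_on (T:={ptws Y -> R}) (simplex (R:=R) (Z:=Y)) (fun q => L q y)) /\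
  (forall y q1 q2 t, simplex q1 -> simplex q2 -> 0 <= t <= 1 ->
     (L (mix t q1 q2) y <= t%:E * L q1 y + (1 - t)%:E * L q2 y)%E).

(* T(X,Y): classification rules h, h x = h(.|x) in Delta(Y) *)
Definition rule (R : realType) (X Y : finType) (h : X -> Y -> R) : Prop :=
  forall x, simplex (h x).

(* l(h, p) = sum_{x,y} p(x,y) L(h(.|x), y)   (convention 0 * +oo = 0) *)
Definition loss (R : realType) (X Y : finType) (L : (Y -> R) -> Y -> \bar R)
    (h : X -> Y -> R) (p : X * Y -> R) : \bar R :=
  (\sum_(z : X * Y) (p z)%:E * L (h z.1) z.2)%E.

(* H_l(p) = min_h l(h,p)  (rendered as an infimum over T(X,Y)) *)
Definition entropy (R : realType) (X Y : finType) (L : (Y -> R) -> Y -> \bar R)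
    (p : X * Y -> R) : \bar R :=
  ereal_inf [set loss L h p | h in [set h | rule h]].

(* H_l(U) = max_{p in U} H_l(p)  (rendered as a supremum) *)
Definition entropyU (R : realType) (X Y : finType) (L : (Y -> R) -> Y -> \bar R)
    (U : set (X * Y -> R)) : \bar R :=
  ereal_sup [set entropy L p | p in U].

Definition worst_loss (R : realType) (X Y : finType) (L : (Y -> R) -> Y -> \bar R)
    (U : set (X * Y -> R)) (h : X -> Y -> R) : \bar R :=
  ereal_sup [set loss L h p | p in U].

Definition MRC (R : realType) (X Y : finType) (L : (Y -> R) -> Y -> \bar R)
    (U : set (X * Y -> R)) (h : X -> Y -> R) : Prop :=
  rule h /\ forall h', rule h' -> (worst_loss L U h <= worst_loss L U h')%E.

Definition risk (R : realType) (X Y : finType) (L : (Y -> R) -> Y -> \bar R)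
    (pstar : X * Y -> R) (h : X -> Y -> R) : \bar R := loss L h pstar.

Definition bayes_risk (R : realType) (X Y : finType) (L : (Y -> R) -> Y -> \bar R)
    (pstar : X * Y -> R) : \bar R :=
  ereal_inf [set risk L pstar h | h in [set h | rule h]].

Definition bayes_classifier (R : realType) (X Y : finType)
    (L : (Y -> R) -> Y -> \bar R) (pstar : X * Y -> R) (h : X -> Y -> R) : Prop :=
  rule h /\ forall h', rule h' -> (risk L pstar h <= risk L pstar h')%E.

(* Main.v *)
Require Import Defs.
From HB Require Import structures.
From mathcomp Require Import all_boot all_order all_algebra.
From mathcomp Require Import all_classical all_reals all_analysis.
From mathcomp Require Import ring lra.
Import numFieldNormedType.Exports.
Import Order.TTheory GRing.Theory Num.Theory.
Local Open Scope classical_set_scope.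
Local Open Scope ring_scope.
Lemma core_ineq (R : realType) (g k ts c m d eta : R) :
  c <= ts * g + (1 - ts) * k -> m <= g -> m <= k -> 0 <= d -> d <= 1 ->
  d * (c - m) <= eta ->
  c - eta <= ((1 - d) * ts + d / 2) * g + (1 - ((1 - d) * ts + d / 2)) * k.
Proof.
move=> h1 hg hk d0 d1 hd.
have e : ((1 - d) * ts + d / 2) * g + (1 - ((1 - d) * ts + d / 2)) * k =
  (1 - d) * (ts * g + (1 - ts) * k) + d * ((g + k) / 2) by field.
rewrite e.
have h2 : (1 - d) * c <= (1 - d) * (ts * g + (1 - ts) * k).
  by apply: ler_wpM2l; lra.
have h3 : d * m <= d * ((g + k) / 2) by apply: ler_wpM2l => //; lra.
lra.
Qed.

Lemma pair_ineq (R : realType) (g1 k1 g2 k2 c : R) :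
  g1 <= c < k1 -> k2 <= c < g2 ->
  (forall th, 0 <= th <= 1 -> th * g1 + (1 - th) * g2 <= c ->
     c < th * k1 + (1 - th) * k2) ->
  (c - k2) / (g2 - k2) <= (k1 - c) / (k1 - g1).
Proof.
move=> /andP[h1 h2] /andP[h3 h4] H.
rewrite leNgt; apply/negP => hlt.
set r := (k1 - c) / (k1 - g1) in hlt; set s := (c - k2) / (g2 - k2) in hlt.
have er : r * (k1 - g1) = k1 - c by rewrite /r; field; lra.
have es : s * (g2 - k2) = c - k2 by rewrite /s; field; lra.
set th := (g2 - c) / (g2 - g1).
have th0 : 0 <= th by apply: divr_ge0; lra.
have th1 : th <= 1 by rewrite /th ler_pdivrMr; lra.
have eg : th * g1 + (1 - th) * g2 = c by rewrite /th; field; lra.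
have P : 0 < (s - r) * ((k1 - g1) * (g2 - k2)).
  by apply: mulr_gt0; [lra| apply: mulr_gt0; lra].
have ek : th * k1 + (1 - th) * k2 = c - (s - r) * ((k1 - g1) * (g2 - k2)) / (g2 - g1).
  have -> : (s - r) * ((k1 - g1) * (g2 - k2)) = s * (g2 - k2) * (k1 - g1) - r * (k1 - g1) * (g2 - k2) by ring.
  rewrite er es /th; field; lra.
have := H th; rewrite th0 th1 eg lexx => /(_ isT isT).
rewrite ek; have : 0 < (s - r) * ((k1 - g1) * (g2 - k2)) / (g2 - g1).
  by apply: divr_gt0 => //; lra.
lra.
Qed.

Lemma two_fun (R : realType) (T : Type) (H : set T) (mixT : R -> T -> T -> T)
  (G K : T -> \bar R) (c m : R) :
  (forall t h1 h2, 0 <= t <= 1 -> H h1 -> H h2 -> H (mixT t h1 h2)) ->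
  (forall t h1 h2, 0 <= t <= 1 -> H h1 -> H h2 ->
     (G (mixT t h1 h2) <= t%:E * G h1 + (1 - t)%:E * G h2)%E) ->
  (forall t h1 h2, 0 <= t <= 1 -> H h1 -> H h2 ->
     (K (mixT t h1 h2) <= t%:E * K h1 + (1 - t)%:E * K h2)%E) ->
  (forall h, H h -> (m%:E <= G h)%E /\ (m%:E <= K h)%E) ->
  m <= c ->
  (forall h, H h -> (c%:E < G h)%E \/ (c%:E < K h)%E) ->
  forall eta, 0 < eta -> exists t, 0 <= t <= 1 /\
    forall h, H h -> ((c - eta)%:E <= t%:E * G h + (1 - t)%:E * K h)%E.
Proof.
move=> Hmix Gc Kc Hb mc Hyp eta eta0.
pose E := [set s : R | s = 0 \/ exists h g k, [/\ H h, G h = g%:E, K h = k%:E,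
   k <= c & s = (c - k) / (g - k)]].
have Jfact : forall h g k, H h -> G h = g%:E -> K h = k%:E -> k <= c -> c < g.
  move=> h g k Hh Gh Kh kc; case: (Hyp h Hh); first by rewrite Gh lte_fin.
  by rewrite Kh lte_fin => /lt_le_trans /(_ kc); rewrite ltxx.
have Ifact : forall h g k, H h -> G h = g%:E -> K h = k%:E -> g <= c -> c < k.
  move=> h g k Hh Gh Kh gc; case: (Hyp h Hh); last by rewrite Kh lte_fin.
  by rewrite Gh lte_fin => /lt_le_trans /(_ gc); rewrite ltxx.
have E0 : E 0 by left.
have Eub : ubound E 1.
  move=> s [->|[h [g [k [Hh Gh Kh kc ->]]]]]; first exact: ler01.
  have := Jfact _ _ _ Hh Gh Kh kc => cg.
  rewrite ler_pdivrMr; lra.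
have hsE : has_sup E by split; [exists 0 | exists 1].
set ts := sup E.
have ts0 : 0 <= ts by apply: sup_upper_bound.
have ts1 : ts <= 1 by apply: ge_sup => //; exists 0.
have P2 : forall h g k, H h -> G h = g%:E -> K h = k%:E -> k <= c ->
    c <= ts * g + (1 - ts) * k.
  move=> h g k Hh Gh Kh kc.
  have cg := Jfact _ _ _ Hh Gh Kh kc.
  have : (c - k) / (g - k) <= ts.
    by apply: sup_upper_bound => //; right; exists h, g, k.
  rewrite ler_pdivrMr; last lra.
  rewrite mulrBr => hh1; lra.
have P3 : forall h g k, H h -> G h = g%:E -> K h = k%:E -> g <= c ->
    c <= ts * g + (1 - ts) * k.
  move=> h1 g1 k1 Hh1 Gh1 Kh1 gc.
  have ck := Ifact _ _ _ Hh1 Gh1 Kh1 gc.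
  have : ts <= (k1 - c) / (k1 - g1).
    apply: ge_sup; first by exists 0.
    move=> s [->|[h2 [g2 [k2 [Hh2 Gh2 Kh2 kc ->]]]]].
      by apply: divr_ge0; lra.
    have cg := Jfact _ _ _ Hh2 Gh2 Kh2 kc.
    apply: pair_ineq; first by rewrite gc ck.
      by rewrite kc cg.
    move=> th /andP[th0 th1] hg.
    have tht : 0 <= th <= 1 by rewrite th0 th1.
    have Hm := Hmix th h1 h2 tht Hh1 Hh2.
    have := Gc th h1 h2 tht Hh1 Hh2; rewrite Gh1 Gh2 -!EFinM -EFinD => Gle.
    have := Kc th h1 h2 tht Hh1 Hh2; rewrite Kh1 Kh2 -!EFinM -EFinD => Kle.
    case: (Hyp _ Hm) => hh.
      have := lt_le_trans hh Gle; rewrite lte_fin => /lt_le_trans /(_ hg).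
      by rewrite ltxx.
    by have := lt_le_trans hh Kle; rewrite lte_fin.
  rewrite ler_pdivlMr; last lra.
  rewrite mulrBr => hh1; lra.
pose u := eta / (c - m + 1).
have u0 : 0 < u by apply: divr_gt0 => //; lra.
have eu : u * (c - m + 1) = eta by rewrite /u; field; lra.
pose d := Num.min 1 u / 2.
have d0 : 0 < d by rewrite /d; apply: divr_gt0 => //; rewrite lt_min ltr01 u0.
have du : d <= u / 2 by rewrite /d ler_pM2r ?ge_min ?lexx ?orbT //.
have d1 : d <= 1 / 2 by rewrite /d ler_pM2r ?ge_min ?lexx //.
have dcm : d * (c - m) <= eta.
  have : 0 <= (u - d) * (c - m) by apply: mulr_ge0; lra.
  have : 0 <= u by lra.
  nra.
pose t := (1 - d) * ts + d / 2.
have tpos : 0 < t.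
  have : 0 <= (1 - d) * ts by apply: mulr_ge0; lra.
  rewrite /t; lra.
have tlt1 : t < 1.
  have : (1 - d) * ts <= (1 - d) * 1 by apply: ler_wpM2l; lra.
  rewrite /t; lra.
exists t; split; first by apply/andP; split; lra.
move=> h Hh; have [Gm Km] := Hb h Hh.
have finite_case : forall g k, G h = g%:E -> K h = k%:E ->
    c <= ts * g + (1 - ts) * k ->
    ((c - eta)%:E <= t%:E * G h + (1 - t)%:E * K h)%E.
  move=> g k eG eK hc; rewrite eG eK in Gm Km *; rewrite -!EFinM -EFinD lee_fin.
  rewrite lee_fin in Gm; rewrite lee_fin in Km.
  apply: (@core_ineq R g k ts c m d eta); lra.
case EG: (G h) Gm => [g| |] // Gm'; case EK: (K h) Km => [k| |] // Km'.
- have [gc|cg] := leP g c; first by have := finite_case g k EG EK (P3 _ _ _ Hh EG EK gc); rewrite EG EK.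
  have [kc|ck] := leP k c; first by have := finite_case g k EG EK (P2 _ _ _ Hh EG EK kc); rewrite EG EK.
  rewrite -!EFinM -EFinD lee_fin.
  have : (1 - t) * c <= (1 - t) * k by apply: ler_wpM2l; lra.
  have : t * c <= t * g by apply: ler_wpM2l; lra.
  lra.
- rewrite gt0_muley ?lte_fin; last lra.
  by rewrite addey ?leey.
- rewrite gt0_muley ?lte_fin; last lra.
  by rewrite addye ?leey // gt0_muley ?lte_fin.
- by rewrite !gt0_muley ?lte_fin ?subr_gt0 // addey ?leey.
Qed.

Fixpoint allP {A : Type} (Q : A -> Prop) (s : seq A) : Prop :=
  match s with [::] => True | x :: s' => Q x /\ allP Q s' end.

Lemma allP_impl (A : Type) (Q Q' : A -> Prop) (s : seq A) :
  (forall x, Q x -> Q' x) -> allP Q s -> allP Q' s.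
Proof. by move=> HQ; elim: s => //= x s IH [/HQ ? /IH ?]. Qed.

Lemma mix_le_const (R : realType) (t x : R) (y z : \bar R) :
  0 <= t <= 1 -> (y <= x%:E)%E -> (z <= x%:E)%E ->
  (t%:E * y + (1 - t)%:E * z <= x%:E)%E.
Proof.
move=> /andP[t0 t1] hy hz.
have t0' : (0 <= t%:E)%E by rewrite lee_fin.
have t1' : (0 <= (1 - t)%:E)%E by rewrite lee_fin; lra.
apply: (le_trans (leeD (lee_wpmul2l t0' hy) (lee_wpmul2l t1' hz))).
rewrite -!EFinM -EFinD lee_fin; lra.
Qed.

Section Abstract.
Variables (R : realType) (T P : Type) (H0 : set T) (mixT : R -> T -> T -> T)
  (U : set P) (mixP : R -> P -> P -> P) (F : T -> P -> \bar R) (M : R).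
Hypothesis Fconv : forall p, U p -> forall t h1 h2, 0 <= t <= 1 -> H0 h1 -> H0 h2 ->
  (F (mixT t h1 h2) p <= t%:E * F h1 p + (1 - t)%:E * F h2 p)%E.
Hypothesis Uconv : forall t p q, 0 <= t <= 1 -> U p -> U q -> U (mixP t p q).
Hypothesis Faff : forall t p q h, 0 <= t <= 1 -> U p -> U q -> H0 h ->
  (t%:E * F h p + (1 - t)%:E * F h q <= F h (mixP t p q))%E.
Hypothesis Fbd : forall h p, H0 h -> U p -> (M%:E <= F h p)%E.

Definition convexT (H : set T) :=
  forall t h1 h2, 0 <= t <= 1 -> H h1 -> H h2 -> H (mixT t h1 h2).

Lemma two_P (H : set T) p q (a eps : R) : H `<=` H0 -> convexT H ->
  U p -> U q -> 0 < eps ->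
  (forall t, 0 <= t <= 1 -> forall d, 0 < d ->
     exists2 h, H h & (F h (mixP t p q) <= (a + d)%:E)%E) ->
  exists2 h, H h & (F h p <= (a + eps)%:E)%E /\ (F h q <= (a + eps)%:E)%E.
Proof.
move=> sH cH Up Uq eps0 Hyp.
apply: contrapT => Hno.
have Hor : forall h, H h -> ((a + eps)%:E < F h p)%E \/ ((a + eps)%:E < F h q)%E.
  move=> h Hh; case: (leP (F h p) (a + eps)%:E) => hp; last by left.
  case: (leP (F h q) (a + eps)%:E) => hq; last by right.
  by exfalso; apply: Hno; exists h.
have mM : ((Num.min M (a + eps))%:E <= M%:E)%E by rewrite lee_fin ge_min lexx.
have bd : forall h, H h -> ((Num.min M (a + eps))%:E <= F h p)%E /\ ((Num.min M (a + eps))%:E <= F h q)%E.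
  move=> h Hh; have H0h := sH _ Hh.
  by split; [exact: (le_trans mM (Fbd _ _ H0h Up))|exact: (le_trans mM (Fbd _ _ H0h Uq))].
have mc : Num.min M (a + eps) <= a + eps by rewrite ge_min lexx orbT.
have [|t [t01 Ht]] := @two_fun R T H mixT (F^~ p) (F^~ q) (a + eps) (Num.min M (a + eps))
  cH (fun t h1 h2 ht H1 H2 => Fconv _ Up _ _ _ ht (sH _ H1) (sH _ H2))
  (fun t h1 h2 ht H1 H2 => Fconv _ Uq _ _ _ ht (sH _ H1) (sH _ H2))
  bd mc Hor (eps / 2).
  by apply: divr_gt0.
have [|h Hh Fh] := Hyp t t01 (eps / 4); first by apply: divr_gt0.
have := le_trans (Ht h Hh) (le_trans (Faff _ _ _ _ t01 Up Uq (sH _ Hh)) Fh).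
rewrite lee_fin; lra.
Qed.

Lemma fin_minimax (ps : seq P) : allP U ps ->
  forall (H : set T) (a : R), H `<=` H0 -> convexT H -> H !=set0 ->
  (forall p, U p -> forall d, 0 < d -> exists2 h, H h & (F h p <= (a + d)%:E)%E) ->
  forall eps, 0 < eps ->
  exists2 h, H h & allP (fun p => F h p <= (a + eps)%:E)%E ps.
Proof.
elim: ps => [_ H a _ _ [h Hh] _ eps _|p ps IH [Up Ups] H a sH cH _ Hyp eps eps0].
  by exists h.
pose H' := [set h | H h /\ (F h p <= (a + eps)%:E)%E].
have sH' : H' `<=` H0 by move=> h [Hh _]; exact: sH.
have cH' : convexT H'.
  move=> t h1 h2 t01 [H1 F1] [H2 F2]; split; first exact: cH.
  apply: (le_trans (Fconv _ Up _ _ _ t01 (sH _ H1) (sH _ H2))).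
  exact: mix_le_const.
have [h0 Hh0 Fh0] := Hyp p Up eps eps0.
have eps2 : 0 < eps / 2 by apply: divr_gt0.
have Hyp' : forall q, U q -> forall d, 0 < d ->
    exists2 h, H' h & (F h q <= (a + eps / 2 + d)%:E)%E.
  move=> q Uq d d0.
  have [|h Hh [Fp Fq]] := two_P H p q a (eps / 2) sH cH Up Uq eps2.
    move=> t t01 d' d'0; apply: Hyp => //; exact: Uconv.
  exists h.
    by split => //; apply: (le_trans Fp); rewrite lee_fin; lra.
  by apply: (le_trans Fq); rewrite lee_fin; lra.
have [h Hh Hall] := IH Ups H' (a + eps / 2) sH' cH' (ex_intro _ h0 (conj Hh0 Fh0)) Hyp' (eps / 2) eps2.
exists h; first by case: Hh.
split; first by case: Hh.
by apply: allP_impl Hall => q; rewrite -addrA -splitr.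
Qed.

End Abstract.

Lemma allP_cat {A : Type} (Q : A -> Prop) s1 s2 :
  allP Q (s1 ++ s2) <-> allP Q s1 /\ allP Q s2.
Proof.
elim: s1 => [|x s1 IH] /=; first by split=> // -[].
by rewrite IH; split=> [[? [? ?]]|[[? ?] ?]].
Qed.

Lemma gt_real (R : realType) (a : R) (x : \bar R) : (a%:E < x)%E ->
  exists b : R, a < b /\ (b%:E < x)%E.
Proof.
case: x => [r| |] //.
  rewrite lte_fin => ar; exists ((a + r) / 2); split; rewrite ?lte_fin; lra.
by move=> _; exists (a + 1); split; [lra|exact: ltey].
Qed.

Lemma compact_minimax (R : realType) (T : topologicalType) (P : Type)
  (H0 : set T) (mixT : R -> T -> T -> T)
  (U : set P) (mixP : R -> P -> P -> P) (F : T -> P -> \bar R) (M : R) :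
  (forall p, U p -> forall t h1 h2, 0 <= t <= 1 -> H0 h1 -> H0 h2 ->
    (F (mixT t h1 h2) p <= t%:E * F h1 p + (1 - t)%:E * F h2 p)%E) ->
  (forall t p q, 0 <= t <= 1 -> U p -> U q -> U (mixP t p q)) ->
  (forall t p q h, 0 <= t <= 1 -> U p -> U q -> H0 h ->
    (t%:E * F h p + (1 - t)%:E * F h q <= F h (mixP t p q))%E) ->
  (forall h p, H0 h -> U p -> (M%:E <= F h p)%E) ->
  convexT R T mixT H0 -> H0 !=set0 -> compact H0 ->
  (forall p, U p -> forall h, H0 h -> forall b : R, (b%:E < F h p)%E ->
     \forall h' \near h, H0 h' -> (b%:E < F h' p)%E) ->
  forall a : R,
  (forall p, U p -> forall d, 0 < d -> exists2 h, H0 h & (F h p <= (a + d)%:E)%E) ->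
  exists2 h, H0 h & forall p, U p -> (F h p <= a%:E)%E.
Proof.
move=> Fconv Uconv Faff Fbd cH0 neH0 coH0 lsc a Hyp.
pose D := [set i : seq P * R | allP U i.1 /\ 0 < i.2].
pose B := fun i : seq P * R =>
  [set h | H0 h /\ allP (fun p => F h p <= (a + i.2)%:E)%E i.1].
have FF : Filter (filter_from D B).
  apply: filter_from_filter; first by exists ([::], 1).
  move=> [s1 e1] [s2 e2] [U1 e10] [U2 e20] /=.
  exists (s1 ++ s2, Num.min e1 e2).
    by split; [apply/allP_cat|rewrite /= lt_min e10 e20].
  move=> h [H0h /allP_cat [A1 A2]]; split; split => //=.
    by apply: allP_impl A1 => p /le_trans; apply; rewrite lee_fin lerD2l ge_min lexx.
  by apply: allP_impl A2 => p /le_trans; apply; rewrite lee_fin lerD2l ge_min lexx orbT.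
have PF : ProperFilter (filter_from D B).
  apply: filter_from_proper => -[s e] [Us e0].
  have [h Hh Hall] := @fin_minimax R T P H0 mixT U mixP F M Fconv Uconv Faff Fbd s Us
     H0 a (@subset_refl _ _) cH0 neH0 Hyp e e0.
  by exists h.
have [|h [H0h clh]] := coH0 _ PF.
  exists ([::], 1); first by split => //=; exact: ltr01.
  by move=> h [].
exists h => // p Up; rewrite leNgt; apply/negP => /gt_real [b [ab bF]].
have Nh := lsc p Up h H0h b bF.
have FB : filter_from D B (B ([:: p], b - a)).
  by exists ([:: p], b - a) => //; split => //=; lra.
have [h' [[H0h' [Fh' _]] Nh']] := clh _ _ FB Nh.
have := Nh' H0h'; rewrite ltNge => /negP; apply.
by move: Fh'; rewrite /= subrKC.
Qed.

Section Topo.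
Import ArrowAsProduct.

Lemma proj_cont (R : realType) (Y : eqType) (y : Y) :
  continuous (fun q : {ptws Y -> R} => q y).
Proof. exact: (@proj_continuous _ (fun _ : Y => R) y). Qed.

Lemma box_compact (R : realType) (Y : eqType) :
  compact [set q : {ptws Y -> R} | forall y, `[0, 1]%classic (q y)].
Proof. exact: (@tychonoff Y (fun _ => R) (fun _ => `[0, 1]%classic) (fun _ => @segment_compact R 0 1)). Qed.

Lemma simplex_compact (R : realType) (Y : finType) :
  compact (simplex (R:=R) (Z:=Y) : set {ptws Y -> R}).
Proof.
apply: (subclosed_compact _ (box_compact R Y)).
  have -> : (simplex (R:=R) (Z:=Y) : set {ptws Y -> R}) =
     (\bigcap_(y in setT) ((fun q : {ptws Y -> R} => q y) @^-1` [set x | 0 <= x]))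
     `&` ((fun q : {ptws Y -> R} => \sum_(y : Y) q y) @^-1` [set x | x = 1]).
    apply/seteqP; split => q [h1 h2]; split => //.
      by move=> y _; exact: h1.
    by move=> y; exact: (h1 y I).
  apply: closedI.
    apply: closed_bigI => y _; apply: preimage_closed; last exact: closed_ge.
    by move=> q _; exact: (proj_cont R _ y q).
  apply: preimage_closed; last exact: closed_eq.
  move=> q _.
  exact: (@continuous_big R Y +%R 0 xpredT (@add_continuous R) {ptws Y -> R}
    (index_enum Y) (fun y (q : {ptws Y -> R}) => q y) (fun y _ => proj_cont R _ y) q).
move=> q [h1 h2] y; rewrite /= in_itv /= h1 /= -h2.
rewrite (bigD1 y) //= lerDl; apply: sumr_ge0 => z _; exact: h1.
Qed.

End Topo.

Definition lscAt (R : realType) (T : topologicalType) (D : set T)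
  (f : T -> \bar R) (x : T) :=
  forall b : R, (b%:E < f x)%E -> \forall y \near x, D y -> (b%:E < f y)%E.
Arguments lscAt {R T}.

Lemma lsc_bounded (R : realType) (T : topologicalType) (D : set T)
  (f : T -> \bar R) : compact D -> (forall x, D x -> f x != -oo%E) ->
  (forall x, D x -> lscAt D f x) ->
  exists m : R, forall x, D x -> (m%:E <= f x)%E.
Proof.
move=> coD finf lscf; apply: contrapT => Hno.
have Hne : forall r : R, exists2 x, D x & (f x < r%:E)%E.
  move=> r; apply: contrapT => H1; apply: Hno; exists r => x Dx.
  rewrite leNgt; apply/negP => fx; apply: H1; by exists x.
pose B := fun r : R => [set x | D x /\ (f x < r%:E)%E].
have FF : Filter (filter_from setT B).
  apply: filter_from_filter; first by exists 0.
  move=> r s _ _; exists (Num.min r s) => // x [Dx fx]; split; split => //;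
    apply: (lt_le_trans fx); rewrite lee_fin ge_min lexx ?orbT //.
have PF : ProperFilter (filter_from setT B).
  apply: filter_from_proper => r _; have [x Dx fx] := Hne r; by exists x.
have [|x [Dx clx]] := coD _ PF; first by exists 0 => // x [].
have [b bfx] : exists b : R, (b%:E < f x)%E.
  move: (finf x Dx); case: (f x) => [r| |] // _.
    by exists (r - 1); rewrite lte_fin; lra.
  by exists 0; exact: ltey.
have Nx := lscf x Dx b bfx.
have FB : filter_from setT B (B b) by exists b.
have [y [[Dy fy] Ny]] := clx _ _ FB Nx.
by have := lt_trans (Ny Dy) fy; rewrite ltxx.
Qed.

Lemma split_lt (R : realType) (b : R) (x y : \bar R) :
  x != -oo%E -> y != -oo%E -> (b%:E < x + y)%E ->
  exists b1 b2 : R, [/\ b1 + b2 = b, (b1%:E < x)%E & (b2%:E < y)%E].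
Proof.
case: x => [r| |] //; case: y => [s| |] // _ _.
- rewrite -EFinD lte_fin => h.
  exists (r - (r + s - b) / 2), (s - (r + s - b) / 2); split; rewrite ?lte_fin; lra.
- move=> _; exists (r - 1), (b - (r - 1)); split; rewrite ?lte_fin ?ltey //; lra.
- move=> _; exists (b - (s - 1)), (s - 1); split; rewrite ?lte_fin ?ltey //; lra.
- move=> _; exists b, 0; split; rewrite ?ltey //; lra.
Qed.

Arguments split_lt {R b x y}.

Lemma lscAt_add (R : realType) (T : topologicalType) (D : set T)
  (f g : T -> \bar R) (x : T) :
  f x != -oo%E -> g x != -oo%E -> lscAt D f x -> lscAt D g x ->
  lscAt D (fun y => f y + g y)%E x.
Proof.
move=> fx gx lf lg b /(split_lt fx gx) [b1 [b2 [<- h1 h2]]].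
have N1 := lf b1 h1; have N2 := lg b2 h2.
apply: filterS (filterI N1 N2) => y [H1 H2] Dy.
by rewrite EFinD; exact: lteD (H1 Dy) (H2 Dy).
Qed.

Lemma sum_nNy (R : realType) (I : Type) (s : seq I) (a : I -> \bar R) :
  (forall i, a i != -oo%E) -> (\sum_(i <- s) a i)%E != -oo%E.
Proof.
move=> ha; elim: s => [|i s IH]; first by rewrite big_nil.
by rewrite big_cons adde_eq_ninfty negb_or ha IH.
Qed.

Lemma mul_nNy (R : realType) (c : R) (v : \bar R) :
  0 <= c -> v != -oo%E -> (c%:E * v)%E != -oo%E.
Proof.
move=> c0; case: v => [r| |] // _.
by rewrite le_eqVlt in c0; case/orP: c0 => [/eqP <-|c0]; rewrite ?mul0e // gt0_muley.
Qed.

Lemma lscAt_cst0 (R : realType) (T : topologicalType) (D : set T) (x : T) :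
  lscAt D (fun _ => 0%E : \bar R) x.
Proof. by move=> b b0; apply: filterE => y _. Qed.

Lemma lscAt_sum (R : realType) (T : topologicalType) (D : set T) (I : Type)
  (s : seq I) (g : I -> T -> \bar R) (x : T) :
  (forall i, g i x != -oo%E) -> (forall i, lscAt D (g i) x) ->
  lscAt D (fun y => \sum_(i <- s) g i y)%E x.
Proof.
move=> gx lg; elim: s => [|i s IH].
  have -> : (fun y => \sum_(i <- [::]) g i y)%E = (fun _ => 0%E) by apply: funext => y; rewrite big_nil.
  exact: lscAt_cst0.
have -> : (fun y => \sum_(j <- i :: s) g j y)%E = (fun y => g i y + \sum_(j <- s) g j y)%E.
  by apply: funext => y; rewrite big_cons.
apply: lscAt_add => //; exact: sum_nNy.
Qed.

Lemma lt_scale (R : realType) (b c : R) (v : \bar R) : 0 < c ->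
  (b%:E < c%:E * v)%E = ((b / c)%:E < v)%E.
Proof.
move=> c0; case: v => [r| |].
- by rewrite -EFinM !lte_fin ltr_pdivrMr // mulrC.
- by rewrite gt0_muley ?lte_fin // !ltey.
- by rewrite gt0_muleNy ?lte_fin //; rewrite !ltNge !leNye.
Qed.

Lemma lscAt_scale (R : realType) (T : topologicalType) (D : set T)
  (g : T -> \bar R) (c : R) (x : T) :
  0 <= c -> lscAt D g x -> lscAt D (fun y => c%:E * g y)%E x.
Proof.
rewrite le_eqVlt => /orP[/eqP <-|c0] lg.
  have -> : (fun y => 0%:E * g y)%E = (fun _ => 0%E) by apply: funext => y; rewrite mul0e.
  exact: lscAt_cst0.
move=> b; rewrite lt_scale // => /lg N.
by apply: filterS N => y H Dy; rewrite lt_scale //; exact: H.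
Qed.

Lemma adde_def_nNy (R : realType) (x y : \bar R) :
  x != -oo%E -> y != -oo%E -> adde_def x y.
Proof. by move=> /negPf hx /negPf hy; rewrite /adde_def hx hy !andbF. Qed.

Lemma simplex_mix (R : realType) (Z : finType) (t : R) (q1 q2 : Z -> R) :
  0 <= t <= 1 -> simplex q1 -> simplex q2 -> simplex (mix t q1 q2).
Proof.
move=> /andP[t0 t1] [p1 s1] [p2 s2]; split.
  move=> z; rewrite /mix; apply: addr_ge0; apply: mulr_ge0 => //; lra.
rewrite /mix big_split /= -!mulr_sumr s1 s2; ring.
Qed.

Section Concrete.
Variables (R : realType) (X Y : finType) (L : (Y -> R) -> Y -> \bar R).
Hypothesis HL : score_function L.

Definition mixH (t : R) (h1 h2 : X -> Y -> R) : X -> Y -> R :=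
  fun x => mix t (h1 x) (h2 x).

Lemma L_nNy q y : simplex q -> L q y != -oo%E.
Proof. by case: HL => H1 _; exact: H1. Qed.

Lemma loss_conv (p : X * Y -> R) (t : R) h1 h2 :
  (forall z, 0 <= p z) -> 0 <= t <= 1 -> rule h1 -> rule h2 ->
  (loss L (mixH t h1 h2) p <= t%:E * loss L h1 p + (1 - t)%:E * loss L h2 p)%E.
Proof.
move=> p0 t01 r1 r2; rewrite /loss.
have t0 : 0 <= t by case/andP: t01.
have t1 : 0 <= 1 - t by case/andP: t01 => _; rewrite subr_ge0.
have nN1 : forall z : X * Y, ((p z)%:E * L (h1 z.1) z.2)%E != -oo%E.
  by move=> z; apply: mul_nNy => //; exact: L_nNy.
have nN2 : forall z : X * Y, ((p z)%:E * L (h2 z.1) z.2)%E != -oo%E.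
  by move=> z; apply: mul_nNy => //; exact: L_nNy.
rewrite !fin_num_sume_distrr //; last 2 first.
  by move=> i j _ _; apply: adde_def_nNy.
  by move=> i j _ _; apply: adde_def_nNy.
rewrite -big_split /=; apply: lee_sum => z _.
have [_ [_ Lc]] := HL.
apply: (le_trans (lee_wpmul2l _ (Lc z.2 _ _ t (r1 z.1) (r2 z.1) t01))).
  by rewrite lee_fin.
rewrite muleDr //; last first.
  by apply: adde_def_nNy; apply: mul_nNy => //; exact: L_nNy.
by rewrite !(muleCA (p z)%:E).
Qed.

End Concrete.
Arguments L_nNy {R Y L} HL {q y}.
Arguments loss_conv {R X Y L} HL {p t h1 h2}.
Arguments simplex_mix {R Z t q1 q2}.

Section Concrete2.
Variables (R : realType) (X Y : finType) (L : (Y -> R) -> Y -> \bar R).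
Hypothesis HL : score_function L.

Lemma loss_nNy (h : X -> Y -> R) (p : X * Y -> R) :
  rule h -> (forall z, 0 <= p z) -> loss L h p != -oo%E.
Proof.
move=> rh p0; apply: sum_nNy => z; apply: mul_nNy => //; exact: (L_nNy HL).
Qed.

Lemma loss_aff (p q : X * Y -> R) (t : R) h :
  (forall z, 0 <= p z) -> (forall z, 0 <= q z) -> 0 <= t <= 1 -> rule h ->
  (t%:E * loss L h p + (1 - t)%:E * loss L h q <= loss L h (mix t p q))%E.
Proof.
move=> p0 q0 t01 rh; rewrite le_eqVlt; apply/orP; left; apply/eqP.
have t0 : 0 <= t by case/andP: t01.
have t1 : 0 <= 1 - t by case/andP: t01 => _; rewrite subr_ge0.
rewrite /loss !fin_num_sume_distrr //; last 2 first.
  by move=> i j _ _; apply: adde_def_nNy; apply: mul_nNy => //; exact: (L_nNy HL).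
  by move=> i j _ _; apply: adde_def_nNy; apply: mul_nNy => //; exact: (L_nNy HL).
rewrite -big_split /=; apply: eq_bigr => z _.
rewrite /mix [in RHS]EFinD ge0_muleDl ?lee_fin ?mulr_ge0 //.
by rewrite !EFinM !muleA.
Qed.

Lemma L_bounded : exists m : R, forall q y, simplex q -> (m%:E <= L q y)%E.
Proof.
have H1 : forall y, exists m : R, forall q, simplex q -> (m%:E <= L q y)%E.
  move=> y; have [_ [Hl _]] := HL.
  have Hb := @lsc_bounded R {ptws Y -> R} (simplex (R:=R) (Z:=Y)) (fun q => L q y)
    (simplex_compact R Y) (fun q sq => L_nNy HL sq) (fun q sq => Hl y q sq).
  by have [m hm] := Hb; exists m.
have [m hm] := choice H1.
exists (- \sum_y `|m y|) => q y sq; apply: le_trans (hm y q sq).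
rewrite lee_fin (bigD1 y) //= opprD.
have : 0 <= \sum_(i | i != y) `|m i| by apply: sumr_ge0 => i _.
have : - `|m y| <= m y by apply: lerNnormlW.
lra.
Qed.

Lemma loss_bounded : exists M : R, forall (h : X -> Y -> R) (p : X * Y -> R), rule h -> simplex p ->
  (M%:E <= loss L h p)%E.
Proof.
have [m hm] := L_bounded.
exists m => h p rh [p0 p1].
apply: (@le_trans _ _ (\sum_(z : X * Y) ((p z)%:E * m%:E))%E).
  by rewrite sumEFin -mulr_suml p1 mul1r.
by apply: lee_sum => z _; apply: lee_wpmul2l; rewrite ?lee_fin //; exact: hm.
Qed.

End Concrete2.
Arguments loss_aff {R X Y L} HL {p q t h}.
Arguments loss_bounded {R} X {Y L} HL.

Section Topo2.
Import ArrowAsProduct.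
Variables (R : realType) (X Y : finType).

Definition H0set : set {ptws X -> {ptws Y -> R}} := [set h | rule h].

Lemma H0_compact : compact H0set.
Proof.
exact: (@tychonoff X (fun _ => {ptws Y -> R}) (fun _ => simplex (R:=R) (Z:=Y))
  (fun _ => simplex_compact R Y)).
Qed.

Lemma lsc_proj (L : (Y -> R) -> Y -> \bar R) (x : X) (y : Y) :
  lsc_on (T:={ptws Y -> R}) (simplex (R:=R) (Z:=Y)) (fun q => L q y) ->
  forall h : {ptws X -> {ptws Y -> R}}, rule h ->
  lscAt H0set (fun h : {ptws X -> {ptws Y -> R}} => L (h x) y) h.
Proof.
move=> lsc h rh b hb.
have N := lsc (h x) (rh x) b hb.
have C := @proj_continuous X (fun _ => {ptws Y -> R}) x h.
have N' : nbhs h (fun h' : {ptws X -> {ptws Y -> R}} =>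
    simplex (h' x) -> (b%:E < L (h' x) y)%E) := C _ N.
by apply: filterS N' => h' H H0h'; exact: H (H0h' x).
Qed.

End Topo2.

Lemma key_minimax (R : realType) (X Y : finType)
  (L : (Y -> R) -> Y -> \bar R) (U : set (X * Y -> R)) (pstar : X * Y -> R) :
  score_function L -> U `<=` simplex (R:=R) (Z:=(X * Y)%type) ->
  convex_set_of U -> U pstar ->
  forall h, MRC L U h -> (worst_loss L U h <= entropyU L U)%E.
Proof.
move=> HL sU cU Upstar h [rh mrch].
case Ec: (entropyU L U) => [a| |]; last 2 first.
- exact: leey.
- exfalso.
  have [M hM] := loss_bounded X HL.
  have : ((M%:E <= entropy L pstar)%E) .
    apply: le_ereal_inf_tmp => y [h' rh' <-]; exact: hM (sU _ Upstar).
  have : (entropy L pstar <= entropyU L U)%E.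
    by apply: ereal_sup_ubound; exists pstar.
  rewrite Ec => H1 H2; have := le_trans H2 H1.
  by rewrite leeNy_eq.
have [M hM] := loss_bounded X HL.
have Hyp : forall p, U p -> forall d, 0 < d ->
    exists2 h0, (H0set R X Y) h0 & (loss L h0 p <= (a + d)%:E)%E.
  move=> p Up d d0.
  have : (entropy L p < (a + d)%:E)%E.
    apply: (le_lt_trans (y := entropyU L U)).
      by apply: ereal_sup_ubound; exists p.
    by rewrite Ec lte_fin ltrDl.
  move=> /ereal_inf_lt [y [h0 rh0 <-] hy]; exists h0 => //; exact: ltW.
have lsc : forall p, U p -> forall h0, (H0set R X Y) h0 -> forall b : R,
    (b%:E < loss L h0 p)%E ->
    \forall h' \near h0, (H0set R X Y) h' -> (b%:E < loss L h' p)%E.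
  move=> p Up h0 H0h0.
  have [p0 _] := sU _ Up.
  have [_ [Hl _]] := HL.
  apply: (@lscAt_sum R {ptws X -> {ptws Y -> R}} (H0set R X Y) (X * Y)%type
    (index_enum (X * Y)%type)
    (fun z (h' : {ptws X -> {ptws Y -> R}}) => ((p z)%:E * L (h' z.1) z.2)%E) h0).
    by move=> z; apply: mul_nNy => //; exact: (L_nNy HL (H0h0 z.1)).
  move=> z; apply: lscAt_scale => //.
  exact: (@lsc_proj R X Y L z.1 z.2 (Hl z.2) h0 H0h0).
have [h0 H0h0 Hh0] := @compact_minimax R {ptws X -> {ptws Y -> R}} (X * Y -> R)
  (H0set R X Y) (@mixH R X Y) U (@mix R (X * Y)%type)
  (fun h p => loss L h p) M
  (fun p Up t h1 h2 t01 r1 r2 => loss_conv HL (fun z => (sU _ Up).1 z) t01 r1 r2)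
  (fun t p q t01 Up Uq => cU p q t Up Uq t01)
  (fun t p q h' t01 Up Uq rh' => loss_aff HL (fun z => (sU _ Up).1 z) (fun z => (sU _ Uq).1 z) t01 rh')
  (fun h' p rh' Up => hM h' p rh' (sU _ Up))
  (fun t h1 h2 t01 r1 r2 x => simplex_mix t01 (r1 x) (r2 x))
  (ex_intro _ h rh) (H0_compact R X Y) lsc a Hyp.
apply: (le_trans (mrch h0 H0h0)).
by apply: ge_ereal_sup => y [p Up <-]; exact: Hh0.
Qed.

Theorem corollary1 (R : realType) (X Y : finType)
  (L : (Y -> R) -> Y -> \bar R) (U : set (X * Y -> R))
  (pstar : X * Y -> R) (hU : X -> Y -> R) :
  (0 < #|X|)%N -> (0 < #|Y|)%N ->
  score_function L ->
  U `<=` simplex (R:=R) (Z:=(X * Y)%type) ->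
  convex_set_of U -> compact (U : set {ptws (X * Y)%type -> R}) ->
  simplex pstar ->
  MRC L U hU ->
  U pstar ->
  ((bayes_risk L pstar <= entropyU L U)%E /\
   (risk L pstar hU <= entropyU L U)%E) /\
  (entropy L pstar = entropyU L U ->
     (forall h, MRC L U h -> bayes_classifier L pstar h) /\
     bayes_risk L pstar = risk L pstar hU /\
     risk L pstar hU = entropyU L U).
Proof.
move=> _ _ HL sU cU _ _ mrcU Upstar.
have key := @key_minimax R X Y L U pstar HL sU cU Upstar.
have riskle : forall h, MRC L U h -> (risk L pstar h <= entropyU L U)%E.
  move=> h mh; apply: le_trans (key h mh).
  by apply: ereal_sup_ubound; exists pstar.
have ent_le : (entropy L pstar <= entropyU L U)%E.
  by apply: ereal_sup_ubound; exists pstar.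
have bE : bayes_risk L pstar = entropy L pstar by [].
split; first by split; [rewrite bE | exact: riskle].
move=> E.
have lb : forall h, rule h -> (entropy L pstar <= risk L pstar h)%E.
  by move=> h rh; apply: ereal_inf_lbound; exists h.
split.
  move=> h mh; split; first by case: mh.
  move=> h' rh'; apply: le_trans (riskle h mh) _; rewrite -E; exact: lb.
have rU : rule hU by case: mrcU.
have e1 : risk L pstar hU = entropyU L U.
  apply/eqP; rewrite eq_le riskle //= -E; exact: lb.
by rewrite e1 bE E.
Qed.
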